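(* Let $a<b$ be real numbers, let $m \ge 1$, and let $F:\mathbb{R}^m \to \mathbb{R}$ be continuous. Suppose that for every choice of subintervals $I_1,\dots,I_m \subset [a,b]$, all closed of a common positive length, such that any two of them are either identical or disjoint, we have \[ F(I_1,\dots,I_m) = F(\ddot I_1,\dots,\ddot I_m). \] Then $F(C_{a,b}^m) = F([a,b]^m)$.
   Context: For a closed interval $I=[c,c+3t]$ with $t>0$, write $\ddot I = [c,c+t]\cup[c+2t,c+3t]$ (the interval with its open middle third removed). For sets $A_1,\dots,A_m\subset\mathbb{R}$, $F(A_1,\dots,A_m)=\{F(x_1,\dots,x_m): x_i\in A_i\}$, and $F(A^m)=F(A,\dots,A)$. The Cantor set is $C=\{\sum_{k\ge1}\alpha_k3^{-k}:\alpha_k\in\{0,2\}\}$, and $C_{a,b} := a + (b-a)C = \{a+(b-a)x : x\in C\}$. *)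

(* Defs.v *)
From HB Require Import structures.
From mathcomp Require Import all_boot all_order all_algebra.
From mathcomp Require Import all_classical all_reals all_analysis.
Set Implicit Arguments. Unset Strict Implicit. Unset Printing Implicit Defensive.
Import Order.TTheory GRing.Theory Num.Theory.
Import numFieldNormedType.Exports.
Local Open Scope classical_set_scope.
Local Open Scope ring_scope.

Definition imF {R : realType} {m : nat} (F : 'rV[R]_m -> R) (A : 'I_m -> set R)
  : set R := [set F x | x in [set x : 'rV[R]_m | forall i, A i (x ord0 i)]].

(* For I = [c, c+3t]:  I'' = [c, c+t] \cup [c+2t, c+3t] *)
Definition ddot {R : realType} (c t : R) : set R :=
  [set` `[c, c + t]] `|` [set` `[c + 2 * t, c + 3 * t]].

Definition cantor {R : realType} : set R :=
  [set x | exists alpha : nat -> bool,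
     (fun n => \sum_(k < n) ((if alpha k then 2 else 0) / 3 ^+ k.+1 : R))
       @ \oo --> x].

Definition cantor_ab {R : realType} (a b : R) : set R :=
  [set a + (b - a) * x | x in cantor].

(* Main.v *)
Require Import Defs.
From HB Require Import structures.
From mathcomp Require Import all_boot all_order all_algebra.
From mathcomp Require Import all_classical all_reals all_analysis.
From mathcomp Require Import lra ring.
Import Order.TTheory GRing.Theory Num.Theory.
Import numFieldNormedType.Exports.
Local Open Scope classical_set_scope.
Local Open Scope ring_scope.

Definition psum {R : realType} (al : nat -> bool) (n : nat) : R :=
  \sum_(k < n) ((if al k then 2 else 0) / 3 ^+ k.+1 : R).

Lemma inv3S {R : realType} n : (3 ^+ n : R)^-1 = 3 * (3 ^+ n.+1)^-1.
Proof.
by rewrite exprS invfM mulrA mulfV ?mul1r // pnatr_eq0.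
Qed.

Lemma psumS {R : realType} al n :
  @psum R al n.+1 = psum al n + (if al n then 2 else 0) / 3 ^+ n.+1.
Proof. by rewrite /psum big_ord_recr. Qed.

Lemma psum_bnd {R : realType} al n : 0 <= @psum R al n <= 1 - (3 ^+ n)^-1.
Proof.
elim: n => [|n /andP[IH1 IH2]]; first by rewrite /psum big_ord0 expr0 invr1 subrr lexx.
rewrite psumS.
have h : 0 < (3 ^+ n.+1 : R)^-1 by rewrite invr_gt0 exprn_gt0.
have e := @inv3S R n.
case: (al n); rewrite /= ?mul0r; apply/andP; split; lra.
Qed.

Lemma psum_ndec {R : realType} al : nondecreasing_seq (@psum R al).
Proof.
apply/nondecreasing_seqP => n; rewrite psumS lerDl.
case: (al n); rewrite ?mul0r // divr_ge0 // exprn_ge0 //.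
Qed.

Lemma psum_cvg {R : realType} al : cvgn (@psum R al).
Proof.
apply: nondecreasing_is_cvgn; first exact: psum_ndec.
exists 1 => _ [n _ <-].
have /andP[_ h] := @psum_bnd R al n.
have : 0 < (3 ^+ n : R)^-1 by rewrite invr_gt0 exprn_gt0.
lra.
Qed.

Lemma cantor01 {R : realType} (x : R) : cantor x -> 0 <= x <= 1.
Proof.
move=> [al Hal].
have -> : x = lim (psum al @ \oo) by rewrite (cvg_lim _ Hal).
apply/andP; split.
  apply: limr_ge; first exact: psum_cvg.
  by near=> n; have /andP[] := @psum_bnd R al n.
apply: limr_le; first exact: psum_cvg.
near=> n; have /andP[_ h] := @psum_bnd R al n.
have : 0 < (3 ^+ n : R)^-1 by rewrite invr_gt0 exprn_gt0.
lra.
Unshelve. all: by end_near.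
Qed.

Lemma cvg_entries {R : realType} m (x : nat -> 'rV[R]_m) (z : 'rV[R]_m) :
  (forall i, (fun n => x n ord0 i) @ \oo --> z ord0 i) -> x @ \oo --> z.
Proof.
move=> H; apply/cvgrPdist_le => /= e e0.
near=> n.
rewrite /Num.Def.normr/= mx_normrE (bigmax_le _ (ltW e0))//= => ij _.
rewrite !mxE/=.
move: ij; near: n; apply: filter_forall => /= -[i j].
rewrite (ord1 i).
exact: ((cvgrPdist_le _ _).1 (H j)).
Unshelve. all: by end_near.
Qed.

Definition Lb {R : realType} (a b : R) (n : nat) : R := (b - a) * (3 ^+ n)^-1.

Definition good {R : realType} {m : nat} (F : 'rV[R]_m -> R) (y a b : R) (n : nat)
  (s : ('I_m -> R) * 'rV[R]_m) : Prop :=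
  F s.2 = y /\ (forall i, a <= s.1 i /\ s.1 i + Lb a b n <= b) /\
  (forall i, s.1 i <= s.2 ord0 i <= s.1 i + Lb a b n) /\
  (forall i j, s.1 i = s.1 j \/ 2 * Lb a b n <= `|s.1 i - s.1 j|).

Lemma Lb_gt0 {R : realType} (a b : R) n : a < b -> 0 < Lb a b n.
Proof. by move=> ab; rewrite /Lb mulr_gt0 ?subr_gt0 // invr_gt0 exprn_gt0. Qed.

Lemma LbS {R : realType} (a b : R) n : Lb a b n = 3 * Lb a b n.+1.
Proof. by rewrite /Lb inv3S mulrCA. Qed.

Lemma stepL {R : realType} (a b : R) (m : nat) (F : 'rV[R]_m -> R) y :
  a < b ->
  (forall (c : 'I_m -> R) (t : R), 0 < t ->
     (forall i, a <= c i /\ c i + 3 * t <= b) ->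
     (forall i j, c i = c j \/
        [set` `[c i, c i + 3 * t]] `&` [set` `[c j, c j + 3 * t]] = set0) ->
     imF F (fun i => [set` `[c i, c i + 3 * t]]) = imF F (fun i => ddot (c i) t)) ->
  forall n s, good F y a b n s -> exists s', good F y a b n.+1 s' /\
    forall i, s'.1 i = s.1 i \/ s'.1 i = s.1 i + 2 * Lb a b n.+1.
Proof.
move=> ab H n [c x] [Fx [Hb [Hx Hd]]] /=.
have Lt := LbS a b n.
have t0 := Lb_gt0 a b n.+1 ab.
simpl in Fx, Hb, Hx, Hd.
set t := Lb a b n.+1 in Lt t0 *.
have Hb' : forall i, a <= c i /\ c i + 3 * t <= b by rewrite -Lt.
have Hd' : forall i j, c i = c j \/
    [set` `[c i, c i + 3 * t]] `&` [set` `[c j, c j + 3 * t]] = set0.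
  move=> i j; case: (Hd i j) => [->|h]; [by left|right].
  apply/seteqP; split => // w /= [] ; rewrite !in_itv /= => /andP[h1 h2] /andP[h3 h4].
  by move: h; rewrite Lt ler_normr => /orP[] ?; lra.
have : imF F (fun i => ddot (c i) t) y.
  rewrite -(H c t t0 Hb' Hd'); exists x; last exact: Fx.
  by move=> i /=; rewrite in_itv /= -Lt; exact: Hx i.
case=> x' Hx' Fx'.
exists ((fun i => if x' ord0 i <= c i + t then c i else c i + 2 * t), x') => /=; rewrite /good /= -/t.
split; last by move=> i /=; case: ifP => _; [left|right].
split => //; split.
  move=> i /=; have := Hb i; rewrite Lt.
  by case: ifP => _ [? ?]; split; lra.
split.
  move=> i /=; have := Hx' i; rewrite /ddot /= !in_itv /=.
  by case: ifP => hx [/andP[? ?]|/andP[? ?]]; apply/andP; split; lra.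
move=> i j /=; case: (Hd i j) => [e|h].
  case: ifP => _; case: ifP => _; try (left; lra);
  right; rewrite ler_normr; apply/orP; (left; lra) || (right; lra).
move: h; rewrite Lt ler_normr => /orP[] h;
case: ifP => _; case: ifP => _;
right; rewrite ler_normr; apply/orP; (left; lra) || (right; lra).
Qed.

Theorem lemma2p2 (R : realType) (a b : R) (m : nat) (F : 'rV[R]_m -> R) :
  a < b -> (0 < m)%N -> continuous F ->
  (forall (c : 'I_m -> R) (t : R), 0 < t ->
     (forall i, a <= c i /\ c i + 3 * t <= b) ->
     (forall i j, c i = c j \/
        [set` `[c i, c i + 3 * t]] `&` [set` `[c j, c j + 3 * t]] = set0) ->
     imF F (fun i => [set` `[c i, c i + 3 * t]]) = imF F (fun i => ddot (c i) t)) ->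
  imF F (fun _ => cantor_ab a b) = imF F (fun _ => [set` `[a, b]]).
Proof.
move=> ab _ Fc H; apply/seteqP; split.
  move=> _ [x Hx <-]; exists x => // i.
  case: (Hx i) => s /cantor01/andP[s0 s1] <-; rewrite /= in_itv /=.
  by apply/andP; split; nra.
move=> _ [x0 Hx0 <-]; set y := F x0.
have step := @stepL R a b m F y ab H.
have : forall q : nat * (('I_m -> R) * 'rV[R]_m), exists s',
    good F y a b q.1 q.2 -> good F y a b q.1.+1 s' /\
    forall i, s'.1 i = q.2.1 i \/ s'.1 i = q.2.1 i + 2 * Lb a b q.1.+1.
  move=> [n s] /=; case: (pselect (good F y a b n s)) => g.
    by have [s' hs] := step n s g; exists s'.
  by exists s.
move=> /choice [f Hf].
pose s0 := ((fun _ : 'I_m => a), x0).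
pose st := fix st (n : nat) := match n with 0 => s0 | k.+1 => f (k, st k) end.
have G : forall n, good F y a b n (st n).
  elim=> [|n IH].
    rewrite /good /= /Lb expr0 invr1 mulr1; split => //; split.
      by move=> i; split; lra.
    split; last by move=> i j; left.
    by move=> i; have := Hx0 i; rewrite /= in_itv /= => /andP[? ?]; apply/andP; split; lra.
  exact: (Hf (n, st n) IH).1.
have Rel : forall n i, (st n.+1).1 i = (st n).1 i \/
    (st n.+1).1 i = (st n).1 i + 2 * Lb a b n.+1.
  by move=> n; exact: (Hf (n, st n) (G n)).2.
pose alpha i k := (st k.+1).1 i != (st k).1 i.
have Ccl : forall i n, (st n).1 i = a + (b - a) * psum (alpha i) n.
  move=> i; elim=> [|n IH].
    by rewrite /psum big_ord0 /=; ring.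
  rewrite psumS /alpha; case: eqP => e /=.
    by rewrite e IH mul0r addr0.
  case: (Rel n i) => // ->; rewrite IH /Lb; ring.
pose s i : R := lim (@psum R (alpha i) @ \oo).
have Hs : forall i, psum (alpha i) @ \oo --> s i by move=> i; exact: psum_cvg.
pose z := \row_i (a + (b - a) * s i).
have Hc : forall i, (fun n => (st n).1 i) @ \oo --> a + (b - a) * s i.
  move=> i.
  have -> : (fun n => (st n).1 i) = (fun n => a + (b - a) * psum (alpha i) n).
    by apply: funext => n; exact: Ccl.
  apply: cvgD; first exact: cvg_cst.
  apply: cvgM; [exact: cvg_cst | exact: Hs].
have HL : Lb a b n @[n --> \oo] --> 0.
  have -> : Lb a b = fun n => (b - a) * (3^-1) ^+ n.
    by apply: funext => n; rewrite /Lb exprVn.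
  rewrite -[X in _ --> X](mulr0 (b - a)).
  apply: cvgM; first exact: cvg_cst.
  apply: cvg_expr; rewrite ger0_norm ?invr_ge0 // invf_lt1 // ltr1n //.
have Hx : forall i, (fun n => (st n).2 ord0 i) @ \oo --> z ord0 i.
  move=> i; rewrite mxE.
  apply: (@squeeze_cvgr _ _ _ _ (fun n => (st n).1 i) (fun n => (st n).1 i + Lb a b n)).
  - by near=> n; have [_ [_ [h _]]] := G n; exact: h i.
  - exact: Hc.
  - rewrite -[X in _ --> X]addr0; apply: cvgD; [exact: Hc | exact: HL].
have Hxz := @cvg_entries R m _ _ Hx.
have HF : (F \o (fun n => (st n).2)) @ \oo --> F z by apply: continuous_cvg; [exact: Fc | exact: Hxz].
have HC : (F \o (fun n => (st n).2)) = fun _ => y.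
  by apply: funext => n /=; have [h _] := G n.
rewrite HC in HF.
exists z.
  move=> i; exists (s i); last by rewrite mxE.
  by exists (alpha i); exact: Hs.
exact: (cvg_unique _ HF (cvg_cst y)).
Unshelve. all: by end_near.
Qed.
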